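(* Consider the system of ordinary differential equations \[ \begin{aligned} \frac{dr_a}{dt} &= \frac{m_a(p_a/\theta_{aa})^{n_{aa}}}{1+(p_a/\theta_{aa})^{n_{aa}}(p_b/\theta_b)^{n_b}}-\gamma_a r_a+A_1,\\ \frac{dr_b}{dt} &= \frac{m_b}{1+(p_a/\theta_a)^{n_a}}-\gamma_b r_b+B_1,\\ \frac{dp_a}{dt} &= k_a r_a-\delta_a p_a,\qquad \frac{dp_b}{dt} = k_b r_b-\delta_b p_b, \end{aligned} \] where $m_a,m_b,\gamma_a,\gamma_b,k_a,k_b,\delta_a,\delta_b,\theta_a,\theta_b,\theta_{aa}>0$, $A_1,B_1\ge 0$, and $n_a,n_b,n_{aa}$ are positive integers. Let $S^*=(r_a^*,r_b^*,p_a^*,p_b^* )$ be a steady state of this system with $p_a^*>0$, $p_b^*>0$. Set, with $p_a=p_a^*$, $p_b=p_b^*$, \[ X=\frac{m_a n_{aa} p_a^{n_{aa}-1}\theta_b^{2n_b}\theta_{aa}^{n_{aa}}}{(p_a^{n_{aa}}p_b^{n_b}+\theta_b^{n_b}\theta_{aa}^{n_{aa}})^2},\quad Y=-\frac{m_a n_b p_a^{2n_{aa}}p_b^{n_b-1}\theta_b^{n_b}}{(p_a^{n_{aa}}p_b^{n_b}+\theta_b^{n_b}\theta_{aa}^{n_{aa}})^2},\quad Z=-\frac{m_b n_a p_a^{n_a-1}\theta_a^{n_a}}{(p_a^{n_a}+\theta_a^{n_a})^2}, \] and \[ \begin{aligned} \epsilon_1&=\gamma_a+\gamma_b+\delta_a+\delta_b,\\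 \epsilon_2&=\gamma_a\gamma_b+(\gamma_a+\gamma_b)(\delta_a+\delta_b)+\delta_a\delta_b-k_aX,\\ \epsilon_3&=\delta_a\delta_b(\gamma_a+\gamma_b)+(\delta_a+\delta_b)\gamma_a\gamma_b-k_a(\delta_b+\gamma_b)X,\\ \epsilon_4&=\gamma_a\gamma_b\delta_a\delta_b-k_ak_bYZ-k_a\gamma_b\delta_bX. \end{aligned} \] If $\epsilon_1>0$, $\epsilon_3>0$, $\epsilon_4>0$ and $\epsilon_1\epsilon_2\epsilon_3-\epsilon_1^2\epsilon_4-\epsilon_3^2>0$, then $S^*$ is locally asymptotically stable.
   Context: This models a two-gene network in which gene $a$ is co-regulated by activation from its own protein $p_a$ and repression by protein $p_b$ (combined via a non-competitive AND logic), and gene $b$ is repressed by $p_a$; $r_a,r_b$ are mRNA concentrations and $p_a,p_b$ protein concentrations. A steady state is a point where all four right-hand sides vanish. *)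

(* Defs.v *)
From Stdlib Require Import Reals.
From Coquelicot Require Import Coquelicot.
Open Scope R_scope.

Definition f_ra (ma thaa thb : R) (naa nb : nat) (ga A1 : R)
  (ra rb pa pb : R) : R :=
  ma * (pa / thaa) ^ naa / (1 + (pa / thaa) ^ naa * (pb / thb) ^ nb)
  - ga * ra + A1.

Definition f_rb (mb tha : R) (na : nat) (gb B1 : R) (ra rb pa pb : R) : R :=
  mb / (1 + (pa / tha) ^ na) - gb * rb + B1.

Definition f_pa (ka da : R) (ra rb pa pb : R) : R := ka * ra - da * pa.

Definition f_pb (kb db : R) (ra rb pa pb : R) : R := kb * rb - db * pb.

(* distance on R^4 (max norm; all norms on R^4 are equivalent) *)
Definition dist4 (a1 a2 a3 a4 b1 b2 b3 b4 : R) : R :=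
  Rmax (Rmax (Rabs (a1 - b1)) (Rabs (a2 - b2)))
       (Rmax (Rabs (a3 - b3)) (Rabs (a4 - b4))).

Definition forward_solution (f1 f2 f3 f4 : R -> R -> R -> R -> R)
  (x1 x2 x3 x4 : R -> R) : Prop :=
  (forall t, 0 < t ->
     is_derive x1 t (f1 (x1 t) (x2 t) (x3 t) (x4 t)) /\
     is_derive x2 t (f2 (x1 t) (x2 t) (x3 t) (x4 t)) /\
     is_derive x3 t (f3 (x1 t) (x2 t) (x3 t) (x4 t)) /\
     is_derive x4 t (f4 (x1 t) (x2 t) (x3 t) (x4 t))) /\
  (forall e, 0 < e -> exists d, 0 < d /\ forall t, 0 <= t < d ->
     dist4 (x1 t) (x2 t) (x3 t) (x4 t) (x1 0) (x2 0) (x3 0) (x4 0) < e).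

Definition locally_asymptotically_stable (f1 f2 f3 f4 : R -> R -> R -> R -> R)
  (s1 s2 s3 s4 : R) : Prop :=
  (forall eps, 0 < eps -> exists del, 0 < del /\
     forall x1 x2 x3 x4, forward_solution f1 f2 f3 f4 x1 x2 x3 x4 ->
       dist4 (x1 0) (x2 0) (x3 0) (x4 0) s1 s2 s3 s4 < del ->
       forall t, 0 <= t -> dist4 (x1 t) (x2 t) (x3 t) (x4 t) s1 s2 s3 s4 < eps) /\
  (exists eta, 0 < eta /\
     forall x1 x2 x3 x4, forward_solution f1 f2 f3 f4 x1 x2 x3 x4 ->
       dist4 (x1 0) (x2 0) (x3 0) (x4 0) s1 s2 s3 s4 < eta ->
       forall e, 0 < e -> exists T, forall t, T <= t ->
         dist4 (x1 t) (x2 t) (x3 t) (x4 t) s1 s2 s3 s4 < e).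

Definition Xq (ma thaa thb : R) (naa nb : nat) (pa pb : R) : R :=
  ma * INR naa * pa ^ (naa - 1) * thb ^ (2 * nb) * thaa ^ naa
  / (pa ^ naa * pb ^ nb + thb ^ nb * thaa ^ naa) ^ 2.

Definition Yq (ma thaa thb : R) (naa nb : nat) (pa pb : R) : R :=
  - (ma * INR nb * pa ^ (2 * naa) * pb ^ (nb - 1) * thb ^ nb
     / (pa ^ naa * pb ^ nb + thb ^ nb * thaa ^ naa) ^ 2).

Definition Zq (mb tha : R) (na : nat) (pa : R) : R :=
  - (mb * INR na * pa ^ (na - 1) * tha ^ na / (pa ^ na + tha ^ na) ^ 2).

(* Main.v *)
Require Import Defs.
From Stdlib Require Import Reals Lra Psatz Classical.
From Coquelicot Require Import Coquelicot.
Open Scope R_scope.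

Ltac pos0 := repeat (apply Rmult_lt_0_compat || apply Rplus_lt_0_compat); try lra.

Lemma amgm (a b y z t : R) : Rabs a <= b -> 0 < t ->
  a * y * z <= b / 2 * (t * y ^ 2 + z ^ 2 / t).
Proof.
  intros Ha Ht.
  set (q := z / t).
  assert (Hz : z = t * q) by (unfold q; field; lra).
  rewrite Hz.
  replace ((t * q) ^ 2 / t) with (t * q ^ 2) by (field; lra).
  assert (Hb : 0 <= b) by (pose proof (Rabs_pos a); lra).
  assert (H1 : a * (y * q) <= b * Rabs (y * q)).
  { destruct (Rle_dec 0 (y*q)).
    - rewrite Rabs_right by lra. pose proof (Rle_abs a). nra.
    - rewrite Rabs_left by lra. pose proof (Rle_abs (-a)). rewrite Rabs_Ropp in H. nra. }
  assert (H2 : 2 * Rabs (y * q) <= y ^ 2 + q ^ 2).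
  { destruct (Rle_dec 0 (y*q)).
    - rewrite Rabs_right by lra. pose proof (pow2_ge_0 (y-q)). nra.
    - rewrite Rabs_left by lra. pose proof (pow2_ge_0 (y+q)). nra. }
  replace (a * y * (t * q)) with (t * (a * (y * q))) by ring.
  replace (b / 2 * (t * y ^ 2 + t * q ^ 2)) with (t * (b / 2 * (y^2 + q^2))) by field.
  apply Rmult_le_compat_l; nra.
Qed.

Lemma exists_v (ga gb da db ka kb X Yp Zp : R) :
  0 < ga -> 0 < gb -> 0 < da -> 0 < db -> 0 < ka -> 0 < kb ->
  0 <= X -> 0 <= Yp -> 0 <= Zp ->
  0 < ga * gb * da * db - ka * gb * db * X - ka * kb * Yp * Zp ->
  exists v1 v2 v3 v4, 0 < v1 /\ 0 < v2 /\ 0 < v3 /\ 0 < v4 /\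
    - ga * v1 + X * v3 + Yp * v4 < 0 /\ - gb * v2 + Zp * v3 < 0 /\
    ka * v1 - da * v3 < 0 /\ kb * v2 - db * v4 < 0.
Proof.
  intros hga hgb hda hdb hka hkb hX hY hZ H.
  set (s := (ga * gb * da * db - ka * gb * db * X - ka * kb * Yp * Zp) / (ka * gb * db)).
  assert (hs : 0 < s) by (unfold s; apply Rdiv_lt_0_compat; [lra | pos0]).
  assert (hs2 : s * ka <= ga * da).
  { unfold s. apply (Rmult_le_reg_r (gb * db)); [pos0|].
    replace ((ga * gb * da * db - ka * gb * db * X - ka * kb * Yp * Zp) / (ka * gb * db) * ka * (gb * db))
      with (ga * gb * da * db - ka * gb * db * X - ka * kb * Yp * Zp) by (field; lra).
    assert (0 <= ka * gb * db * X) by (apply Rmult_le_pos; [apply Rlt_le; pos0|lra]).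
    assert (0 <= ka * kb * Yp * Zp) by (apply Rmult_le_pos; [apply Rmult_le_pos; [apply Rlt_le; pos0|lra]|lra]).
    lra. }
  set (al := s / (4 * ga)).
  set (be := s / (4 * (Yp + 1) * (kb / db + 1))).
  assert (hkd : 0 < kb / db) by (apply Rdiv_lt_0_compat; lra).
  assert (hal : 0 < al) by (unfold al; apply Rdiv_lt_0_compat; lra).
  assert (hbe : 0 < be) by (unfold be; apply Rdiv_lt_0_compat; [lra|]; apply Rmult_lt_0_compat; lra).
  exists (da / ka - al), (Zp / gb + be), 1, (kb * (Zp / gb + be) / db + be).
  assert (hv1 : 0 < da / ka - al).
  { unfold al. apply Rlt_0_minus.
    apply (Rmult_lt_reg_r (4 * ga * ka)); [pos0|].
    replace (s / (4 * ga) * (4 * ga * ka)) with (s * ka) by (field; lra).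
    replace (da / ka * (4 * ga * ka)) with (4 * (ga * da)) by (field; lra). nra. }
  assert (hZg : 0 <= Zp / gb) by (apply Rdiv_le_0_compat; lra).
  repeat split; try lra.
  - apply Rplus_lt_le_0_compat; [|lra].
    apply Rdiv_lt_0_compat; [|lra]. apply Rmult_lt_0_compat; lra.
  -
    assert (E : - ga * (da / ka - al) + X * 1 + Yp * (kb * (Zp / gb + be) / db + be)
      = - s + ga * al + Yp * be * (kb / db + 1)).
    { unfold s. field. lra. }
    rewrite E.
    assert (E2 : ga * al = s / 4) by (unfold al; field; lra).
    assert (E3 : Yp * be * (kb / db + 1) = s / 4 * (Yp / (Yp + 1))).
    { unfold be. field. lra. }
    rewrite E2, E3.
    assert (Yp / (Yp + 1) < 1).
    { apply (Rmult_lt_reg_r (Yp + 1)); [lra|].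
      replace (Yp / (Yp + 1) * (Yp + 1)) with Yp by (field; lra). lra. }
    nra.
  - replace (- gb * (Zp / gb + be) + Zp * 1) with (- gb * be) by (field; lra). nra.
  - replace (ka * (da / ka - al) - da * 1) with (- ka * al) by (field; lra). nra.
  - replace (kb * (Zp / gb + be) - db * (kb * (Zp / gb + be) / db + be)) with (- db * be)
      by (field; lra). nra.
Qed.

Lemma lin_lyap (ga gb da db ka kb X Y Z : R) :
  0 < ga -> 0 < gb -> 0 < da -> 0 < db -> 0 < ka -> 0 < kb ->
  0 <= X -> 0 <= Y * Z ->
  0 < ga * gb * da * db - ka * kb * Y * Z - ka * gb * db * X ->
  exists d1 d2 d3 d4 c, 0 < d1 /\ 0 < d2 /\ 0 < d3 /\ 0 < d4 /\ 0 < c /\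
   forall y1 y2 y3 y4,
     d1 * y1 * (- ga * y1 + X * y3 + Y * y4) + d2 * y2 * (- gb * y2 + Z * y3)
     + d3 * y3 * (ka * y1 - da * y3) + d4 * y4 * (kb * y2 - db * y4)
     <= - c * (y1 ^ 2 + y2 ^ 2 + y3 ^ 2 + y4 ^ 2).
Proof.
  intros hga hgb hda hdb hka hkb hX hYZ H.
  set (Yp := Rabs Y). set (Zp := Rabs Z).
  assert (hYp : 0 <= Yp) by apply Rabs_pos.
  assert (hZp : 0 <= Zp) by apply Rabs_pos.
  assert (EYZ : Yp * Zp = Y * Z).
  { unfold Yp, Zp. rewrite <- Rabs_mult. apply Rabs_right. lra. }
  assert (H' : 0 < ga * gb * da * db - ka * gb * db * X - ka * kb * Yp * Zp).
  { replace (ka * kb * Yp * Zp) with (ka * kb * (Yp * Zp)) by ring. rewrite EYZ. lra. }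
  destruct (exists_v ga gb da db ka kb X Yp Zp) as (v1 & v2 & v3 & v4 & hv1 & hv2 & hv3 & hv4 & r1 & r2 & r3 & r4); auto.
  destruct (exists_v da db ga gb ka kb X Zp Yp) as (w3 & w4 & w1 & w2 & hw3 & hw4 & hw1 & hw2 & c3 & c4 & c1 & c2); auto.
  { replace (da * db * ga * gb - ka * db * gb * X - ka * kb * Zp * Yp)
      with (ga * gb * da * db - ka * gb * db * X - ka * kb * Yp * Zp) by ring. exact H'. }
  set (d1 := w1 / v1). set (d2 := w2 / v2). set (d3 := w3 / v3). set (d4 := w4 / v4).
  assert (hd1 : 0 < d1) by (apply Rdiv_lt_0_compat; lra).
  assert (hd2 : 0 < d2) by (apply Rdiv_lt_0_compat; lra).
  assert (hd3 : 0 < d3) by (apply Rdiv_lt_0_compat; lra).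
  assert (hd4 : 0 < d4) by (apply Rdiv_lt_0_compat; lra).
  set (k1 := (d1 * (- ga * v1 + X * v3 + Yp * v4) + (- ga * w1 + ka * w3)) / (2 * v1)).
  set (k2 := (d2 * (- gb * v2 + Zp * v3) + (- gb * w2 + kb * w4)) / (2 * v2)).
  set (k3 := (d3 * (ka * v1 - da * v3) + (X * w1 + Zp * w2 - da * w3)) / (2 * v3)).
  set (k4 := (d4 * (kb * v2 - db * v4) + (Yp * w1 - db * w4)) / (2 * v4)).
  assert (hk1 : k1 < 0).
  { unfold k1. apply Rdiv_neg_pos; [|lra]. assert (d1 * (- ga * v1 + X * v3 + Yp * v4) < 0) by nra. lra. }
  assert (hk2 : k2 < 0).
  { unfold k2. apply Rdiv_neg_pos; [|lra]. assert (d2 * (- gb * v2 + Zp * v3) < 0) by nra. lra. }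
  assert (hk3 : k3 < 0).
  { unfold k3. apply Rdiv_neg_pos; [|lra]. assert (d3 * (ka * v1 - da * v3) < 0) by nra. lra. }
  assert (hk4 : k4 < 0).
  { unfold k4. apply Rdiv_neg_pos; [|lra]. assert (d4 * (kb * v2 - db * v4) < 0) by nra. lra. }
  set (c := Rmin (Rmin (- k1) (- k2)) (Rmin (- k3) (- k4))).
  assert (hc : 0 < c).
  { unfold c. apply Rmin_pos; apply Rmin_pos; lra. }
  assert (hc1 : k1 <= - c).
  { unfold c. pose proof (Rmin_l (Rmin (- k1) (- k2)) (Rmin (- k3) (- k4))).
    pose proof (Rmin_l (- k1) (- k2)). lra. }
  assert (hc2 : k2 <= - c).
  { unfold c. pose proof (Rmin_l (Rmin (- k1) (- k2)) (Rmin (- k3) (- k4))).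
    pose proof (Rmin_r (- k1) (- k2)). lra. }
  assert (hc3 : k3 <= - c).
  { unfold c. pose proof (Rmin_r (Rmin (- k1) (- k2)) (Rmin (- k3) (- k4))).
    pose proof (Rmin_l (- k3) (- k4)). lra. }
  assert (hc4 : k4 <= - c).
  { unfold c. pose proof (Rmin_r (Rmin (- k1) (- k2)) (Rmin (- k3) (- k4))).
    pose proof (Rmin_r (- k3) (- k4)). lra. }
  exists d1, d2, d3, d4, c. repeat split; auto.
  intros y1 y2 y3 y4.
  assert (A13 : (X * d1 + ka * d3) * y1 * y3 <= (X * d1 + ka * d3) / 2 * (v3 / v1 * y1 ^ 2 + y3 ^ 2 / (v3 / v1))).
  { apply amgm. rewrite Rabs_right; [lra|]. nra. apply Rdiv_lt_0_compat; lra. }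
  assert (A14 : (Y * d1) * y1 * y4 <= (Yp * d1) / 2 * (v4 / v1 * y1 ^ 2 + y4 ^ 2 / (v4 / v1))).
  { apply amgm. rewrite Rabs_mult, (Rabs_right d1) by lra. unfold Yp; lra. apply Rdiv_lt_0_compat; lra. }
  assert (A23 : (Z * d2) * y2 * y3 <= (Zp * d2) / 2 * (v3 / v2 * y2 ^ 2 + y3 ^ 2 / (v3 / v2))).
  { apply amgm. rewrite Rabs_mult, (Rabs_right d2) by lra. unfold Zp; lra. apply Rdiv_lt_0_compat; lra. }
  assert (A24 : (kb * d4) * y2 * y4 <= (kb * d4) / 2 * (v4 / v2 * y2 ^ 2 + y4 ^ 2 / (v4 / v2))).
  { apply amgm. rewrite Rabs_right; [lra|]. nra. apply Rdiv_lt_0_compat; lra. }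
  assert (EL : d1 * y1 * (- ga * y1 + X * y3 + Y * y4) + d2 * y2 * (- gb * y2 + Z * y3)
     + d3 * y3 * (ka * y1 - da * y3) + d4 * y4 * (kb * y2 - db * y4)
     = - ga * d1 * y1 ^ 2 - gb * d2 * y2 ^ 2 - da * d3 * y3 ^ 2 - db * d4 * y4 ^ 2
       + (X * d1 + ka * d3) * y1 * y3 + (Y * d1) * y1 * y4 + (Z * d2) * y2 * y3
       + (kb * d4) * y2 * y4) by ring.
  assert (EK : - ga * d1 * y1 ^ 2 - gb * d2 * y2 ^ 2 - da * d3 * y3 ^ 2 - db * d4 * y4 ^ 2
       + (X * d1 + ka * d3) / 2 * (v3 / v1 * y1 ^ 2 + y3 ^ 2 / (v3 / v1))
       + (Yp * d1) / 2 * (v4 / v1 * y1 ^ 2 + y4 ^ 2 / (v4 / v1))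
       + (Zp * d2) / 2 * (v3 / v2 * y2 ^ 2 + y3 ^ 2 / (v3 / v2))
       + (kb * d4) / 2 * (v4 / v2 * y2 ^ 2 + y4 ^ 2 / (v4 / v2))
       = k1 * y1 ^ 2 + k2 * y2 ^ 2 + k3 * y3 ^ 2 + k4 * y4 ^ 2).
  { unfold k1, k2, k3, k4, d1, d2, d3, d4. field. repeat split; lra. }
  assert (k1 * y1 ^ 2 <= - c * y1 ^ 2) by (apply Rmult_le_compat_r; [apply pow2_ge_0|lra]).
  assert (k2 * y2 ^ 2 <= - c * y2 ^ 2) by (apply Rmult_le_compat_r; [apply pow2_ge_0|lra]).
  assert (k3 * y3 ^ 2 <= - c * y3 ^ 2) by (apply Rmult_le_compat_r; [apply pow2_ge_0|lra]).
  assert (k4 * y4 ^ 2 <= - c * y4 ^ 2) by (apply Rmult_le_compat_r; [apply pow2_ge_0|lra]).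
  lra.
Qed.

Lemma mvt_nonincr (psi : R -> R) (a b : R) : a < b ->
  (forall c, a <= c <= b -> continuity_pt psi c) ->
  (forall c, a < c < b -> ex_derive psi c) ->
  (forall c, a < c < b -> Derive psi c <= 0) -> psi b <= psi a.
Proof.
  intros hab hc hd hD.
  assert (pr1 : forall c, a < c < b -> derivable_pt psi c).
  { intros c Hc. apply ex_derive_Reals_0. auto. }
  assert (pr2 : forall c, a < c < b -> derivable_pt id c).
  { intros c _. apply derivable_pt_id. }
  destruct (MVT psi id a b pr1 pr2 hab hc) as (c & P & E).
  { intros c _. apply derivable_continuous_pt, derivable_pt_id. }
  rewrite Derive_Reals in E.
  assert (Hid : derive_pt id c (pr2 c P) = 1).
  { rewrite Derive_Reals. unfold id. apply is_derive_unique. apply (is_derive_id c). }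
  rewrite Hid in E. unfold id in E.
  specialize (hD c P). nra.
Qed.

Lemma barrier (psi : R -> R) (K : R) : psi 0 < K ->
  (forall t, 0 <= t -> continuity_pt psi t) ->
  (forall t, 0 < t -> ex_derive psi t) ->
  (forall t, 0 < t -> psi t < K -> Derive psi t <= 0) ->
  forall t, 0 <= t -> psi t <= psi 0.
Proof.
  intros h0 hc hd hD.
  assert (key : forall t0, 0 <= t0 -> forall u, 0 <= u <= t0 -> psi u < K).
  { intros t0 ht0.
    set (E := fun s => 0 <= s <= t0 /\ forall u, 0 <= u <= s -> psi u < K).
    assert (bE : bound E) by (exists t0; intros s [Hs _]; lra).
    assert (nE : exists s, E s).
    { exists 0. split; [lra|]. intros u Hu. replace u with 0 by lra. exact h0. }
    destruct (completeness E bE nE) as [ss [Hub Hlub]].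
    assert (hss0 : 0 <= ss) by (apply Hub; destruct nE; unfold E; split; [lra|]; intros u Hu; replace u with 0 by lra; exact h0).
    assert (hsst : ss <= t0) by (apply Hlub; intros s [Hs _]; lra).
    assert (below : forall u, 0 <= u < ss -> psi u < K).
    { intros u Hu. destruct (Rle_dec ss u) as [|Hn]; [lra|].
      destruct (classic (exists s, E s /\ u <= s)) as [[s [[_ Hs] Hus]]|Hno].
      - apply Hs; lra.
      - exfalso. assert (ss <= u).
        { apply Hlub. intros s Hs. destruct (Rle_dec s u); [auto|]. exfalso; apply Hno; exists s; split; auto; lra. }
        lra. }
    assert (atss : psi ss < K).
    { destruct (Req_dec ss 0) as [->|Hne]; [exact h0|].
      assert (psi ss <= psi 0).
      { apply mvt_nonincr; [lra| | |].
        - intros c Hc. apply hc; lra.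
        - intros c Hc. apply hd; lra.
        - intros c Hc. apply hD; [lra|]. apply below; lra. }
      lra. }
    assert (upto : forall u, 0 <= u <= ss -> psi u < K).
    { intros u Hu. destruct (Req_dec u ss) as [->|]; [auto|]. apply below; lra. }
    destruct (Req_dec ss t0) as [Heq|Hne].
    { subst. exact upto. }
    exfalso.
    destruct (proj1 (continuity_pt_locally psi ss) (hc ss hss0) (mkposreal (K - psi ss) ltac:(lra))) as [del Hdel].
    simpl in Hdel.
    set (s' := Rmin t0 (ss + del / 2)).
    assert (hdel := cond_pos del).
    assert (Es' : E s').
    { split. unfold s'. split. apply Rmin_glb; lra. apply Rmin_l.
      intros u Hu. destruct (Rle_dec u ss). apply upto; lra.
      assert (u <= ss + del / 2) by (pose proof (Rmin_r t0 (ss + del/2)); unfold s' in Hu; lra).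
      assert (Rabs (psi u - psi ss) < K - psi ss).
      { apply Hdel. unfold ball; simpl; unfold AbsRing_ball; simpl. unfold abs, minus, plus, opp; simpl.
        rewrite Rabs_right; lra. }
      pose proof (Rle_abs (psi u - psi ss)). lra. }
    assert (s' <= ss) by (apply Hub; auto).
    assert (ss < s') by (unfold s'; apply Rmin_glb_lt; lra). lra. }
  intros t ht.
  destruct (Req_dec t 0) as [->|Hne]; [lra|].
  apply mvt_nonincr; [lra| | |].
  - intros c Hc. apply hc; lra.
  - intros c Hc. apply hd; lra.
  - intros c Hc. apply hD; [lra|]. apply (key t); lra.
Qed.

Lemma dist4_ge (a1 a2 a3 a4 b1 b2 b3 b4 : R) :
  Rabs (a1 - b1) <= dist4 a1 a2 a3 a4 b1 b2 b3 b4 /\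
  Rabs (a2 - b2) <= dist4 a1 a2 a3 a4 b1 b2 b3 b4 /\
  Rabs (a3 - b3) <= dist4 a1 a2 a3 a4 b1 b2 b3 b4 /\
  Rabs (a4 - b4) <= dist4 a1 a2 a3 a4 b1 b2 b3 b4.
Proof.
  unfold dist4.
  pose proof (Rmax_l (Rmax (Rabs (a1 - b1)) (Rabs (a2 - b2))) (Rmax (Rabs (a3 - b3)) (Rabs (a4 - b4)))).
  pose proof (Rmax_r (Rmax (Rabs (a1 - b1)) (Rabs (a2 - b2))) (Rmax (Rabs (a3 - b3)) (Rabs (a4 - b4)))).
  pose proof (Rmax_l (Rabs (a1 - b1)) (Rabs (a2 - b2))).
  pose proof (Rmax_r (Rabs (a1 - b1)) (Rabs (a2 - b2))).
  pose proof (Rmax_l (Rabs (a3 - b3)) (Rabs (a4 - b4))).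
  pose proof (Rmax_r (Rabs (a3 - b3)) (Rabs (a4 - b4))).
  repeat split; lra.
Qed.

Lemma dist4_lt (a1 a2 a3 a4 b1 b2 b3 b4 e : R) :
  Rabs (a1 - b1) < e -> Rabs (a2 - b2) < e -> Rabs (a3 - b3) < e -> Rabs (a4 - b4) < e ->
  dist4 a1 a2 a3 a4 b1 b2 b3 b4 < e.
Proof.
  intros. unfold dist4. repeat apply Rmax_lub_lt; auto.
Qed.

Lemma cont_sq (g : R -> R) (d s t : R) : continuity_pt g t ->
  continuity_pt (fun u => d * (g u - s) ^ 2) t.
Proof.
  intros.
  apply continuity_pt_mult. apply continuity_pt_const. intros a b; reflexivity.
  apply (continuity_pt_comp (fun u => g u - s) (fun z => z^2)). apply continuity_pt_minus; auto.
  apply continuity_pt_const. intros a b; reflexivity. apply derivable_continuous_pt, derivable_pt_pow.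
Qed.

Lemma cont_psi (g1 g2 g3 g4 : R -> R) d1 d2 d3 d4 s1 s2 s3 s4 k t :
  continuity_pt g1 t -> continuity_pt g2 t -> continuity_pt g3 t -> continuity_pt g4 t ->
  continuity_pt (fun u => (d1 * (g1 u - s1) ^ 2 + d2 * (g2 u - s2) ^ 2
                           + d3 * (g3 u - s3) ^ 2 + d4 * (g4 u - s4) ^ 2) * exp (k * u)) t.
Proof.
  intros.
  apply continuity_pt_mult.
  repeat apply continuity_pt_plus; apply cont_sq; auto.
  apply (continuity_pt_comp (fun u => k * u) exp).
  apply continuity_pt_mult. apply continuity_pt_const. intros a b; reflexivity.
  apply derivable_continuous_pt, derivable_pt_id.
  apply derivable_continuous_pt, derivable_pt_exp.
Qed.

Lemma der_psi (g1 g2 g3 g4 : R -> R) l1 l2 l3 l4 d1 d2 d3 d4 s1 s2 s3 s4 k t :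
  is_derive g1 t l1 -> is_derive g2 t l2 -> is_derive g3 t l3 -> is_derive g4 t l4 ->
  is_derive (fun u => (d1 * (g1 u - s1) ^ 2 + d2 * (g2 u - s2) ^ 2
                           + d3 * (g3 u - s3) ^ 2 + d4 * (g4 u - s4) ^ 2) * exp (k * u)) t
   ((2 * (d1 * (g1 t - s1) * l1 + d2 * (g2 t - s2) * l2 + d3 * (g3 t - s3) * l3 + d4 * (g4 t - s4) * l4)
     + k * (d1 * (g1 t - s1) ^ 2 + d2 * (g2 t - s2) ^ 2
                           + d3 * (g3 t - s3) ^ 2 + d4 * (g4 t - s4) ^ 2)) * exp (k * t)).
Proof.
  intros H1 H2 H3 H4. auto_derive.
  - repeat split; eexists; eauto.
  - replace (Derive (fun x => g1 x) t) with l1 by (symmetry; apply is_derive_unique; auto).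
    replace (Derive (fun x => g2 x) t) with l2 by (symmetry; apply is_derive_unique; auto).
    replace (Derive (fun x => g3 x) t) with l3 by (symmetry; apply is_derive_unique; auto).
    replace (Derive (fun x => g4 x) t) with l4 by (symmetry; apply is_derive_unique; auto).
    ring.
Qed.

Lemma ext_der (x : R -> R) (t l : R) : 0 < t -> is_derive x t l ->
  is_derive (fun u => x (Rmax 0 u)) t l.
Proof.
  intros ht H. apply (is_derive_ext_loc x); auto.
  exists (mkposreal t ht). intros y Hy. simpl in Hy.
  unfold ball in Hy; simpl in Hy; unfold AbsRing_ball, abs, minus, plus, opp in Hy; simpl in Hy.
  rewrite Rmax_right; auto.
  destruct (Rcase_abs (y + - t)) as [Hn|Hp].
  - rewrite Rabs_left in Hy; lra.
  - lra.
Qed.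

Lemma ext_cont0 (x : R -> R) :
  (forall e, 0 < e -> exists d, 0 < d /\ forall t, 0 <= t < d -> Rabs (x t - x 0) < e) ->
  continuity_pt (fun u => x (Rmax 0 u)) 0.
Proof.
  intros H. apply continuity_pt_locally. intros eps.
  destruct (H eps (cond_pos eps)) as (d & hd & Hd).
  exists (mkposreal d hd). intros u Hu. simpl in Hu.
  unfold ball in Hu; simpl in Hu; unfold AbsRing_ball, abs, minus, plus, opp in Hu; simpl in Hu.
  rewrite (Rmax_left 0 0) by lra.
  destruct (Rle_dec 0 u).
  - rewrite Rmax_right by auto. apply Hd. split; auto.
    rewrite Rabs_right in Hu; lra.
  - rewrite Rmax_left by lra. rewrite Rminus_diag, Rabs_R0. apply cond_pos.
Qed.

Lemma decay (f1 f2 f3 f4 : R -> R -> R -> R -> R) (s1 s2 s3 s4 d1 d2 d3 d4 c rho : R) :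
  0 < d1 -> 0 < d2 -> 0 < d3 -> 0 < d4 -> 0 < c -> 0 < rho ->
  (forall y1 y2 y3 y4, Rabs y1 < rho -> Rabs y2 < rho -> Rabs y3 < rho -> Rabs y4 < rho ->
    d1 * y1 * f1 (s1 + y1) (s2 + y2) (s3 + y3) (s4 + y4)
    + d2 * y2 * f2 (s1 + y1) (s2 + y2) (s3 + y3) (s4 + y4)
    + d3 * y3 * f3 (s1 + y1) (s2 + y2) (s3 + y3) (s4 + y4)
    + d4 * y4 * f4 (s1 + y1) (s2 + y2) (s3 + y3) (s4 + y4)
    <= - c * (y1 ^ 2 + y2 ^ 2 + y3 ^ 2 + y4 ^ 2)) ->
  forall x1 x2 x3 x4, forward_solution f1 f2 f3 f4 x1 x2 x3 x4 ->
  let V := fun t => d1 * (x1 t - s1) ^ 2 + d2 * (x2 t - s2) ^ 2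
                  + d3 * (x3 t - s3) ^ 2 + d4 * (x4 t - s4) ^ 2 in
  V 0 < Rmin (Rmin d1 d2) (Rmin d3 d4) * rho ^ 2 ->
  forall t, 0 <= t -> V t <= V 0 * exp (- (2 * c / (d1 + d2 + d3 + d4)) * t).
Proof.
  intros hd1 hd2 hd3 hd4 hc hrho HL x1 x2 x3 x4 [Hder Hcont] V HV0.
  set (m := Rmin (Rmin d1 d2) (Rmin d3 d4)) in *.
  set (D := d1 + d2 + d3 + d4).
  set (k := 2 * c / D).
  assert (hD : 0 < D) by (unfold D; lra).
  assert (hk : 0 < k) by (unfold k; apply Rdiv_lt_0_compat; lra).
  assert (hm1 : m <= d1) by (unfold m; pose proof (Rmin_l (Rmin d1 d2) (Rmin d3 d4)); pose proof (Rmin_l d1 d2); lra).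
  assert (hm2 : m <= d2) by (unfold m; pose proof (Rmin_l (Rmin d1 d2) (Rmin d3 d4)); pose proof (Rmin_r d1 d2); lra).
  assert (hm3 : m <= d3) by (unfold m; pose proof (Rmin_r (Rmin d1 d2) (Rmin d3 d4)); pose proof (Rmin_l d3 d4); lra).
  assert (hm4 : m <= d4) by (unfold m; pose proof (Rmin_r (Rmin d1 d2) (Rmin d3 d4)); pose proof (Rmin_r d3 d4); lra).
  assert (hm : 0 < m) by (unfold m; repeat apply Rmin_pos; lra).
  set (psi := fun u => (d1 * (x1 (Rmax 0 u) - s1) ^ 2 + d2 * (x2 (Rmax 0 u) - s2) ^ 2
                           + d3 * (x3 (Rmax 0 u) - s3) ^ 2 + d4 * (x4 (Rmax 0 u) - s4) ^ 2) * exp (k * u)).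
  assert (Hpsi : forall u, 0 <= u -> psi u = V u * exp (k * u)).
  { intros u hu. unfold psi, V. rewrite Rmax_right by lra. reflexivity. }
  assert (Hpsi0 : psi 0 = V 0).
  { rewrite Hpsi by lra. rewrite Rmult_0_r, exp_0. ring. }
  assert (HdP : forall u, 0 < u -> is_derive psi u
     ((2 * (d1 * (x1 u - s1) * f1 (x1 u) (x2 u) (x3 u) (x4 u)
          + d2 * (x2 u - s2) * f2 (x1 u) (x2 u) (x3 u) (x4 u)
          + d3 * (x3 u - s3) * f3 (x1 u) (x2 u) (x3 u) (x4 u)
          + d4 * (x4 u - s4) * f4 (x1 u) (x2 u) (x3 u) (x4 u)) + k * V u) * exp (k * u))).
  { intros u hu. destruct (Hder u hu) as (h1 & h2 & h3 & h4).
    pose proof (der_psi _ _ _ _ _ _ _ _ d1 d2 d3 d4 s1 s2 s3 s4 k u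
       (ext_der _ _ _ hu h1) (ext_der _ _ _ hu h2) (ext_der _ _ _ hu h3) (ext_der _ _ _ hu h4)) as P.
    cbv beta in P. rewrite (Rmax_right 0 u) in P by lra. exact P. }
  assert (HV : forall u, 0 <= V u).
  { intros u. unfold V.
    pose proof (pow2_ge_0 (x1 u - s1)). pose proof (pow2_ge_0 (x2 u - s2)).
    pose proof (pow2_ge_0 (x3 u - s3)). pose proof (pow2_ge_0 (x4 u - s4)). nra. }
  assert (key : forall u, 0 <= u -> psi u <= psi 0).
  { apply (barrier psi (m * rho ^ 2)).
    - rewrite Hpsi0. exact HV0.
    - intros u hu. destruct (Req_dec u 0) as [->|hne].
      + apply cont_psi; apply ext_cont0; intros e he; destruct (Hcont e he) as (d & hd & Hd);
          exists d; split; auto; intros t0 ht0; pose proof (dist4_ge (x1 t0) (x2 t0) (x3 t0) (x4 t0) (x1 0) (x2 0) (x3 0) (x4 0)) as G;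
          specialize (Hd t0 ht0); lra.
      + apply continuity_pt_filterlim. apply (ex_derive_continuous (K:=R_AbsRing) (V:=R_NormedModule) psi). eexists. apply HdP. lra.
    - intros u hu. eexists. apply HdP. exact hu.
    - intros u hu Hlt. rewrite (is_derive_unique _ _ _ (HdP u hu)).
      rewrite Hpsi in Hlt by lra.
      assert (he : 1 <= exp (k * u)).
      { rewrite <- exp_0. apply Rlt_le, exp_increasing. apply Rmult_lt_0_compat; lra. }
      assert (HVu : V u < m * rho ^ 2) by (pose proof (HV u); nra).
      set (y1 := x1 u - s1). set (y2 := x2 u - s2). set (y3 := x3 u - s3). set (y4 := x4 u - s4).
      assert (EV : V u = d1 * y1 ^ 2 + d2 * y2 ^ 2 + d3 * y3 ^ 2 + d4 * y4 ^ 2) by reflexivity.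
      pose proof (pow2_ge_0 y1). pose proof (pow2_ge_0 y2). pose proof (pow2_ge_0 y3). pose proof (pow2_ge_0 y4).
      assert (Hy : forall y, m * y ^ 2 < m * rho ^ 2 -> Rabs y < rho).
      { intros y Hy. apply Rmult_lt_reg_l in Hy; auto.
        rewrite <- (Rabs_right rho) by lra. apply Rsqr_lt_abs_0. unfold Rsqr. nra. }
      assert (a1 : Rabs y1 < rho) by (apply Hy; nra).
      assert (a2 : Rabs y2 < rho) by (apply Hy; nra).
      assert (a3 : Rabs y3 < rho) by (apply Hy; nra).
      assert (a4 : Rabs y4 < rho) by (apply Hy; nra).
      specialize (HL y1 y2 y3 y4 a1 a2 a3 a4).
      unfold y1, y2, y3, y4 in HL.
      replace (s1 + (x1 u - s1)) with (x1 u) in HL by ring.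
      replace (s2 + (x2 u - s2)) with (x2 u) in HL by ring.
      replace (s3 + (x3 u - s3)) with (x3 u) in HL by ring.
      replace (s4 + (x4 u - s4)) with (x4 u) in HL by ring.
      fold y1 y2 y3 y4 in HL.
      assert (HVD : k * V u <= 2 * c * (y1 ^ 2 + y2 ^ 2 + y3 ^ 2 + y4 ^ 2)).
      { rewrite EV. unfold k.
        assert (d1 * y1 ^ 2 + d2 * y2 ^ 2 + d3 * y3 ^ 2 + d4 * y4 ^ 2 <= D * (y1 ^ 2 + y2 ^ 2 + y3 ^ 2 + y4 ^ 2))
          by (unfold D; nra).
        apply (Rmult_le_reg_l D); auto.
        replace (D * (2 * c / D * (d1 * y1 ^ 2 + d2 * y2 ^ 2 + d3 * y3 ^ 2 + d4 * y4 ^ 2)))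
          with (2 * c * (d1 * y1 ^ 2 + d2 * y2 ^ 2 + d3 * y3 ^ 2 + d4 * y4 ^ 2)) by (field; lra).
        nra. }
      assert (2 * (d1 * y1 * f1 (x1 u) (x2 u) (x3 u) (x4 u) + d2 * y2 * f2 (x1 u) (x2 u) (x3 u) (x4 u) +
          d3 * y3 * f3 (x1 u) (x2 u) (x3 u) (x4 u) + d4 * y4 * f4 (x1 u) (x2 u) (x3 u) (x4 u)) + k * V u <= 0) by lra.
      pose proof (exp_pos (k * u)). nra. }
  intros t ht.
  specialize (key t ht). rewrite Hpsi, Hpsi0 in key by lra.
  replace (V t) with (V t * exp (k * t) * exp (- k * t)).
  2:{ rewrite Rmult_assoc, <- exp_plus. replace (k * t + - k * t) with 0 by ring. rewrite exp_0. ring. }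
  apply Rmult_le_compat_r; [apply Rlt_le, exp_pos | exact key].
Qed.

Lemma small_comp (m d y e : R) : 0 < m -> m <= d -> 0 < e -> d * y ^ 2 < m * e ^ 2 -> Rabs y < e.
Proof.
  intros hm hd he H.
  assert (y ^ 2 < e ^ 2).
  { pose proof (pow2_ge_0 y). apply (Rmult_lt_reg_l m); auto. nra. }
  rewrite <- (Rabs_right e) by lra. apply Rsqr_lt_abs_0. unfold Rsqr. nra.
Qed.

Lemma small_dist (m d1 d2 d3 d4 y1 y2 y3 y4 e : R) : 0 < m -> m <= d1 -> m <= d2 -> m <= d3 -> m <= d4 ->
  0 < e -> d1 * y1 ^ 2 + d2 * y2 ^ 2 + d3 * y3 ^ 2 + d4 * y4 ^ 2 < m * e ^ 2 ->
  Rabs y1 < e /\ Rabs y2 < e /\ Rabs y3 < e /\ Rabs y4 < e.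
Proof.
  intros hm h1 h2 h3 h4 he H.
  pose proof (pow2_ge_0 y1). pose proof (pow2_ge_0 y2). pose proof (pow2_ge_0 y3). pose proof (pow2_ge_0 y4).
  repeat split.
  - apply (small_comp m d1); auto; nra.
  - apply (small_comp m d2); auto; nra.
  - apply (small_comp m d3); auto; nra.
  - apply (small_comp m d4); auto; nra.
Qed.

Lemma V_le_dist (d1 d2 d3 d4 a1 a2 a3 a4 b1 b2 b3 b4 : R) : 0 < d1 -> 0 < d2 -> 0 < d3 -> 0 < d4 ->
  d1 * (a1 - b1) ^ 2 + d2 * (a2 - b2) ^ 2 + d3 * (a3 - b3) ^ 2 + d4 * (a4 - b4) ^ 2
  <= (d1 + d2 + d3 + d4) * (dist4 a1 a2 a3 a4 b1 b2 b3 b4) ^ 2.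
Proof.
  intros. destruct (dist4_ge a1 a2 a3 a4 b1 b2 b3 b4) as (g1 & g2 & g3 & g4).
  set (r := dist4 a1 a2 a3 a4 b1 b2 b3 b4) in *.
  assert (forall z, Rabs z <= r -> z ^ 2 <= r ^ 2).
  { intros z Hz. rewrite <- (pow2_abs z). pose proof (Rabs_pos z). nra. }
  pose proof (H3 _ g1). pose proof (H3 _ g2). pose proof (H3 _ g3). pose proof (H3 _ g4). nra.
Qed.

Lemma LAS_from_lyap (f1 f2 f3 f4 : R -> R -> R -> R -> R) (s1 s2 s3 s4 d1 d2 d3 d4 c rho : R) :
  0 < d1 -> 0 < d2 -> 0 < d3 -> 0 < d4 -> 0 < c -> 0 < rho ->
  (forall y1 y2 y3 y4, Rabs y1 < rho -> Rabs y2 < rho -> Rabs y3 < rho -> Rabs y4 < rho ->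
    d1 * y1 * f1 (s1 + y1) (s2 + y2) (s3 + y3) (s4 + y4)
    + d2 * y2 * f2 (s1 + y1) (s2 + y2) (s3 + y3) (s4 + y4)
    + d3 * y3 * f3 (s1 + y1) (s2 + y2) (s3 + y3) (s4 + y4)
    + d4 * y4 * f4 (s1 + y1) (s2 + y2) (s3 + y3) (s4 + y4)
    <= - c * (y1 ^ 2 + y2 ^ 2 + y3 ^ 2 + y4 ^ 2)) ->
  locally_asymptotically_stable f1 f2 f3 f4 s1 s2 s3 s4.
Proof.
  intros hd1 hd2 hd3 hd4 hc hrho HL.
  set (m := Rmin (Rmin d1 d2) (Rmin d3 d4)).
  set (D := d1 + d2 + d3 + d4).
  set (k := 2 * c / D).
  assert (hD : 0 < D) by (unfold D; lra).
  assert (hk : 0 < k) by (unfold k; apply Rdiv_lt_0_compat; lra).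
  assert (hm1 : m <= d1) by (unfold m; pose proof (Rmin_l (Rmin d1 d2) (Rmin d3 d4)); pose proof (Rmin_l d1 d2); lra).
  assert (hm2 : m <= d2) by (unfold m; pose proof (Rmin_l (Rmin d1 d2) (Rmin d3 d4)); pose proof (Rmin_r d1 d2); lra).
  assert (hm3 : m <= d3) by (unfold m; pose proof (Rmin_r (Rmin d1 d2) (Rmin d3 d4)); pose proof (Rmin_l d3 d4); lra).
  assert (hm4 : m <= d4) by (unfold m; pose proof (Rmin_r (Rmin d1 d2) (Rmin d3 d4)); pose proof (Rmin_r d3 d4); lra).
  assert (hm : 0 < m) by (unfold m; repeat apply Rmin_pos; lra).
  assert (hmD : m <= D) by (unfold D; lra).
  assert (init : forall r x1 x2 x3 x4, 0 < r ->
     dist4 (x1 0) (x2 0) (x3 0) (x4 0) s1 s2 s3 s4 < r * m / (2 * D) ->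
     d1 * (x1 0 - s1) ^ 2 + d2 * (x2 0 - s2) ^ 2 + d3 * (x3 0 - s3) ^ 2 + d4 * (x4 0 - s4) ^ 2 < m * r ^ 2).
  { intros r x1 x2 x3 x4 hr Hd.
    pose proof (V_le_dist d1 d2 d3 d4 (x1 0) (x2 0) (x3 0) (x4 0) s1 s2 s3 s4 hd1 hd2 hd3 hd4) as HV.
    fold D in HV.
    set (q := dist4 (x1 0) (x2 0) (x3 0) (x4 0) s1 s2 s3 s4) in *.
    assert (hq : 0 <= q) by (unfold q; pose proof (dist4_ge (x1 0) (x2 0) (x3 0) (x4 0) s1 s2 s3 s4) as [G _]; pose proof (Rabs_pos (x1 0 - s1)); lra).
    assert (q ^ 2 < (r * m / (2 * D)) ^ 2) by nra.
    assert (D * (r * m / (2 * D)) ^ 2 < m * r ^ 2).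
    { replace (D * (r * m / (2 * D)) ^ 2) with (m * r ^ 2 * (m / (4 * D))) by (field; lra).
      assert (m / (4 * D) < 1).
      { apply (Rmult_lt_reg_r (4 * D)); [lra|]. replace (m / (4 * D) * (4 * D)) with m by (field; lra). lra. }
      assert (0 < m * r ^ 2) by (apply Rmult_lt_0_compat; [lra| apply pow_lt; lra]).
      nra. }
    nra. }
  split.
  - intros eps heps.
    set (r := Rmin rho eps).
    assert (hr : 0 < r) by (unfold r; apply Rmin_pos; lra).
    exists (r * m / (2 * D)). split.
    { apply Rdiv_lt_0_compat; [apply Rmult_lt_0_compat|]; lra. }
    intros x1 x2 x3 x4 Hsol Hd t ht.
    pose proof (init r x1 x2 x3 x4 hr Hd) as H0.
    assert (hr1 : r <= rho) by apply Rmin_l.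
    assert (hr2 : r <= eps) by apply Rmin_r.
    assert (Hrr : m * r ^ 2 <= m * rho ^ 2) by (apply Rmult_le_compat_l; [lra|]; apply pow_incr; lra).
    assert (Hre : m * r ^ 2 <= m * eps ^ 2) by (apply Rmult_le_compat_l; [lra|]; apply pow_incr; lra).
    pose proof (decay f1 f2 f3 f4 s1 s2 s3 s4 d1 d2 d3 d4 c rho hd1 hd2 hd3 hd4 hc hrho HL x1 x2 x3 x4 Hsol) as Dc.
    cbv beta zeta in Dc. fold m D in Dc. specialize (Dc ltac:(lra) t ht).
    assert (exp (- (2 * c / D) * t) <= 1).
    { destruct (Req_dec t 0) as [->|hne]. rewrite Rmult_0_r, exp_0; lra.
      rewrite <- exp_0. apply Rlt_le, exp_increasing.
      assert (0 < 2 * c / D * t) by (apply Rmult_lt_0_compat; [exact hk|lra]). lra. }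
    assert (0 <= d1 * (x1 0 - s1) ^ 2 + d2 * (x2 0 - s2) ^ 2 + d3 * (x3 0 - s3) ^ 2 + d4 * (x4 0 - s4) ^ 2).
    { pose proof (pow2_ge_0 (x1 0 - s1)). pose proof (pow2_ge_0 (x2 0 - s2)).
      pose proof (pow2_ge_0 (x3 0 - s3)). pose proof (pow2_ge_0 (x4 0 - s4)). nra. }
    destruct (small_dist m d1 d2 d3 d4 (x1 t - s1) (x2 t - s2) (x3 t - s3) (x4 t - s4) eps) as (a1 & a2 & a3 & a4); auto.
    { nra. }
    apply dist4_lt; auto.
  - exists (rho * m / (2 * D)). split.
    { apply Rdiv_lt_0_compat; [apply Rmult_lt_0_compat|]; lra. }
    intros x1 x2 x3 x4 Hsol Hd e he.
    pose proof (init rho x1 x2 x3 x4 hrho Hd) as H0.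
    pose proof (decay f1 f2 f3 f4 s1 s2 s3 s4 d1 d2 d3 d4 c rho hd1 hd2 hd3 hd4 hc hrho HL x1 x2 x3 x4 Hsol) as Dc.
    cbv beta zeta in Dc. fold m D in Dc. specialize (Dc H0).
    exists (rho ^ 2 / (k * e ^ 2)). intros t ht.
    assert (hT : 0 < rho ^ 2 / (k * e ^ 2)).
    { apply Rdiv_lt_0_compat; [apply pow_lt; lra|]. apply Rmult_lt_0_compat; [lra|apply pow_lt; lra]. }
    specialize (Dc t ltac:(lra)). fold k in Dc.
    assert (Hex : rho ^ 2 * exp (- k * t) < e ^ 2).
    { assert (hkt : 0 < k * t) by (apply Rmult_lt_0_compat; lra).
      pose proof (exp_ineq1 (k * t) ltac:(lra)).
      assert (rho ^ 2 <= k * t * e ^ 2).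
      { apply (Rmult_le_reg_r (/ (k * e ^ 2))).
        apply Rinv_0_lt_compat, Rmult_lt_0_compat; [lra|apply pow_lt; lra].
        replace (k * t * e ^ 2 * / (k * e ^ 2)) with t by (field; repeat split; lra).
        exact ht. }
      assert (E : exp (- k * t) * exp (k * t) = 1).
      { rewrite <- exp_plus. replace (- k * t + k * t) with 0 by ring. apply exp_0. }
      pose proof (exp_pos (- k * t)). pose proof (pow_lt e 2 he). nra. }
    assert (0 <= d1 * (x1 0 - s1) ^ 2 + d2 * (x2 0 - s2) ^ 2 + d3 * (x3 0 - s3) ^ 2 + d4 * (x4 0 - s4) ^ 2).
    { pose proof (pow2_ge_0 (x1 0 - s1)). pose proof (pow2_ge_0 (x2 0 - s2)).
      pose proof (pow2_ge_0 (x3 0 - s3)). pose proof (pow2_ge_0 (x4 0 - s4)). nra. }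
    pose proof (exp_pos (- k * t)).
    destruct (small_dist m d1 d2 d3 d4 (x1 t - s1) (x2 t - s2) (x3 t - s3) (x4 t - s4) e) as (a1 & a2 & a3 & a4); auto.
    { assert (d1 * (x1 0 - s1) ^ 2 + d2 * (x2 0 - s2) ^ 2 + d3 * (x3 0 - s3) ^ 2 + d4 * (x4 0 - s4) ^ 2 <= m * rho ^ 2) by lra.
      nra. }
    apply dist4_lt; auto.
Qed.

Lemma fd_fst (a : R -> R) (x y da : R) : is_derive a x da ->
  filterdiff (fun t : R * R => a (fst t)) (locally (x, y)) (fun t : R * R => fst t * da).
Proof.
  intros H.
  apply (filterdiff_comp' (fun t : R * R => fst t) a (x, y) (fun t => fst t) (fun z => scal z da)).
  - apply filterdiff_linear, is_linear_fst.
  - exact H.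
Qed.

Lemma fd_snd (a : R -> R) (x y da : R) : is_derive a y da ->
  filterdiff (fun t : R * R => a (snd t)) (locally (x, y)) (fun t : R * R => snd t * da).
Proof.
  intros H.
  apply (filterdiff_comp' (fun t : R * R => snd t) a (x, y) (fun t => snd t) (fun z => scal z da)).
  - apply filterdiff_linear, is_linear_snd.
  - exact H.
Qed.

Lemma fd_mult (f g : R * R -> R) (p : R * R) lf lg :
  filterdiff f (locally p) lf -> filterdiff g (locally p) lg ->
  filterdiff (fun t => f t * g t) (locally p) (fun t => lf t * g p + f p * lg t).
Proof.
  intros Hf Hg.
  apply (filterdiff_mult_fct (K := R_AbsRing) f g p lf lg); auto.
  intros; apply Rmult_comm.
Qed.

Lemma fd_comp1 (f : R * R -> R) (r : R -> R) (p : R * R) lf dr :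
  filterdiff f (locally p) lf -> is_derive r (f p) dr ->
  filterdiff (fun t => r (f t)) (locally p) (fun t => lf t * dr).
Proof.
  intros Hf Hr.
  apply (filterdiff_comp' f r p lf (fun z => scal z dr)); auto.
Qed.

Lemma h_diff (ma thaa thb : R) (naa nb : nat) (pa pb : R) :
  0 < thaa -> 0 < thb -> 0 < pa -> 0 < pb ->
  let a := fun x => ma * (x / thaa) ^ naa in
  let u := fun x => (x / thaa) ^ naa in
  let b := fun y => (y / thb) ^ nb in
  let r := fun z => / (1 + z) in
  forall a' u' b' r', is_derive a pa a' -> is_derive u pa u' -> is_derive b pb b' ->
  is_derive r (u pa * b pb) r' ->
  differentiable_pt_lim (fun x y => ma * (x / thaa) ^ naa / (1 + (x / thaa) ^ naa * (y / thb) ^ nb)) pa pb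
    (a' * r (u pa * b pb) + a pa * (u' * b pb * r')) (a pa * (u pa * b' * r')).
Proof.
  intros hth hthb hpa hpb a u b r a' u' b' r' Ha Hu Hb Hr.
  apply filterdiff_differentiable_pt_lim.
  pose proof (fd_mult _ _ (pa, pb) _ _ (fd_fst a pa pb a' Ha)
     (fd_comp1 _ r (pa, pb) _ r' (fd_mult _ _ (pa, pb) _ _ (fd_fst u pa pb u' Hu) (fd_snd b pa pb b' Hb)) Hr)) as P.
  eapply filterdiff_ext_lin.
  - eapply filterdiff_ext; [|exact P].
    intros t. simpl. unfold a, u, b, r. unfold Rdiv. ring.
  - intros t. simpl. ring.
Qed.

Ltac pos5 := repeat (apply Rmult_lt_0_compat || apply Rplus_lt_0_compat); try lra.

Lemma h_diffXY (ma thaa thb : R) (naa nb : nat) (pa pb : R) :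
  0 < thaa -> 0 < thb -> 0 < pa -> 0 < pb -> (0 < naa)%nat -> (0 < nb)%nat ->
  differentiable_pt_lim (fun x y => ma * (x / thaa) ^ naa / (1 + (x / thaa) ^ naa * (y / thb) ^ nb)) pa pb
    (Xq ma thaa thb naa nb pa pb) (Yq ma thaa thb naa nb pa pb).
Proof.
  intros hth hthb hpa hpb hna hnb.
  destruct naa as [|n]; [lia|]. destruct nb as [|j]; [lia|].
  set (u0 := (pa / thaa) ^ S n). set (b0 := (pb / thb) ^ S j).
  assert (hu0 : 0 < u0) by (apply pow_lt, Rdiv_lt_0_compat; lra).
  assert (hb0 : 0 < b0) by (apply pow_lt, Rdiv_lt_0_compat; lra).
  set (a' := ma * (1 * / thaa * (INR (S n) * (pa * / thaa) ^ Init.Nat.pred (S n)))).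
  set (u' := 1 * / thaa * (INR (S n) * (pa * / thaa) ^ Init.Nat.pred (S n))).
  set (b' := 1 * / thb * (INR (S j) * (pb * / thb) ^ Init.Nat.pred (S j))).
  set (r' := - (1) * / ((1 + u0 * b0) * (1 + u0 * b0))).
  assert (Ha : is_derive (fun x => ma * (x / thaa) ^ S n) pa a') by (auto_derive; auto).
  assert (Hu : is_derive (fun x => (x / thaa) ^ S n) pa u') by (auto_derive; auto).
  assert (Hb : is_derive (fun x => (x / thb) ^ S j) pb b') by (auto_derive; auto).
  assert (Hr : is_derive (fun z => / (1 + z)) ((fun x => (x / thaa) ^ S n) pa * (fun y => (y / thb) ^ S j) pb) r').
  { cbv beta. fold u0 b0. auto_derive. pose proof (Rmult_lt_0_compat _ _ hu0 hb0); lra. unfold r'. ring. }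
  pose proof (h_diff ma thaa thb (S n) (S j) pa pb hth hthb hpa hpb a' u' b' r' Ha Hu Hb Hr) as P.
  cbv beta in P. fold u0 b0 in P.
  set (P0 := pa ^ n). set (T0 := thaa ^ n). set (Q0 := pb ^ j). set (S0 := thb ^ j).
  assert (hP : 0 < P0) by (apply pow_lt; lra).
  assert (hT : 0 < T0) by (apply pow_lt; lra).
  assert (hQ : 0 < Q0) by (apply pow_lt; lra).
  assert (hS : 0 < S0) by (apply pow_lt; lra).
  assert (Eu : u0 = pa * P0 / (thaa * T0)).
  { unfold u0, P0, T0. unfold Rdiv. rewrite Rpow_mult_distr, pow_inv. simpl. field. repeat split; try lra; apply pow_nonzero; lra. }
  assert (Eb : b0 = pb * Q0 / (thb * S0)).
  { unfold b0, Q0, S0. unfold Rdiv. rewrite Rpow_mult_distr, pow_inv. simpl. field. repeat split; try lra; apply pow_nonzero; lra. }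
  assert (Ep : forall x y k, 0 < y -> (x * / y) ^ k = x ^ k / y ^ k).
  { intros x y k hy. unfold Rdiv. rewrite Rpow_mult_distr, pow_inv. reflexivity. }
  simpl Init.Nat.pred in a', u', b'.
  unfold Xq, Yq.
  replace (S n - 1)%nat with n by lia. replace (S j - 1)%nat with j by lia.
  rewrite !pow_sqr, !Rpow_mult_distr.
  replace (pa ^ S n) with (pa * P0) by reflexivity.
  replace (thaa ^ S n) with (thaa * T0) by reflexivity.
  replace (pb ^ S j) with (pb * Q0) by reflexivity.
  replace (thb ^ S j) with (thb * S0) by reflexivity.
  fold P0 T0 Q0 S0.
  eapply differentiable_pt_lim_ext; [exists (mkposreal 1 Rlt_0_1); intros; reflexivity|].
  replace (ma * INR (S n) * P0 * (thb * S0 * (thb * S0)) * (thaa * T0) / (pa * P0 * (pb * Q0) + thb * S0 * (thaa * T0)) ^ 2)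
    with (a' * / (1 + u0 * b0) + ma * u0 * (u' * b0 * r')).
  replace (- (ma * INR (S j) * (pa * P0 * (pa * P0)) * Q0 * (thb * S0) / (pa * P0 * (pb * Q0) + thb * S0 * (thaa * T0)) ^ 2))
    with (ma * u0 * (u0 * b' * r')).
  exact P.
  - unfold b', r'. rewrite Eu, Eb, Ep by lra. fold Q0 S0. field. repeat split; try lra; apply Rgt_not_eq; pos5.
  - unfold a', u', r'. rewrite Eu, Eb, Ep by lra. fold P0 T0. field. repeat split; try lra; apply Rgt_not_eq; pos5.
Qed.

Ltac pos6 := repeat (apply Rmult_lt_0_compat || apply Rplus_lt_0_compat || apply Rdiv_lt_0_compat || apply Rinv_0_lt_compat || apply pow_lt || apply lt_0_INR); try lra; try lia.

Lemma F_der (mb tha : R) (na : nat) (pa : R) : 0 < tha -> 0 < pa -> (0 < na)%nat ->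
  is_derive (fun x => mb / (1 + (x / tha) ^ na)) pa (Zq mb tha na pa).
Proof.
  intros hth hpa hna. destruct na as [|n]; [lia|].
  auto_derive.
  - apply Rgt_not_eq. pos6.
  - unfold Zq. change (Init.Nat.pred (S n)) with n. replace (S n - 1)%nat with n by lia.
    replace ((pa * / tha) ^ n) with (pa ^ n / tha ^ n)
      by (unfold Rdiv; rewrite Rpow_mult_distr, pow_inv; reflexivity).
    replace ((pa * / tha) ^ S n) with (pa ^ S n / tha ^ S n)
      by (unfold Rdiv; rewrite Rpow_mult_distr, pow_inv; reflexivity).
    replace (pa ^ S n) with (pa * pa ^ n) by reflexivity.
    replace (tha ^ S n) with (tha * tha ^ n) by reflexivity.
    assert (0 < pa ^ n) by pos6. assert (0 < tha ^ n) by pos6.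
    change (match n with 0%nat => 1 | S _ => INR n + 1 end) with (INR (S n)).
    field. repeat split; try lra; apply Rgt_not_eq; pos6.
Qed.

Lemma X_nonneg (ma thaa thb : R) (naa nb : nat) (pa pb : R) :
  0 < ma -> 0 < thaa -> 0 < thb -> 0 < pa -> 0 < pb -> (0 < naa)%nat ->
  0 <= Xq ma thaa thb naa nb pa pb.
Proof.
  intros. unfold Xq. apply Rlt_le. pos6.
Qed.

Lemma YZ_nonneg (ma mb tha thaa thb : R) (na naa nb : nat) (pa pb : R) :
  0 < ma -> 0 < mb -> 0 < tha -> 0 < thaa -> 0 < thb -> 0 < pa -> 0 < pb -> (0 < na)%nat -> (0 < nb)%nat ->
  0 <= Yq ma thaa thb naa nb pa pb * Zq mb tha na pa.
Proof.
  intros. unfold Yq, Zq.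
  assert (0 < ma * INR nb * pa ^ (2 * naa) * pb ^ (nb - 1) * thb ^ nb /
     (pa ^ naa * pb ^ nb + thb ^ nb * thaa ^ naa) ^ 2) by pos6.
  assert (0 < mb * INR na * pa ^ (na - 1) * tha ^ na / (pa ^ na + tha ^ na) ^ 2) by pos6.
  nra.
Qed.

Lemma prod_bound (a b : R) : Rabs a * Rabs b <= a ^ 2 + b ^ 2.
Proof.
  rewrite <- (pow2_abs a), <- (pow2_abs b).
  pose proof (Rabs_pos a). pose proof (Rabs_pos b).
  pose proof (pow2_ge_0 (Rabs a - Rabs b)). nra.
Qed.

Lemma max_bound (y1 y2 y3 y4 : R) :
  Rabs y1 * Rmax (Rabs y3) (Rabs y4) <= y1 ^ 2 + y2 ^ 2 + y3 ^ 2 + y4 ^ 2.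
Proof.
  pose proof (pow2_ge_0 y1). pose proof (pow2_ge_0 y2). pose proof (pow2_ge_0 y3). pose proof (pow2_ge_0 y4).
  unfold Rmax. destruct (Rle_dec (Rabs y3) (Rabs y4)).
  - pose proof (prod_bound y1 y4). lra.
  - pose proof (prod_bound y1 y3). lra.
Qed.

Theorem theorem2
  (ma mb ga gb ka kb da db tha thb thaa A1 B1 : R) (na nb naa : nat)
  (hma : 0 < ma) (hmb : 0 < mb) (hga : 0 < ga) (hgb : 0 < gb)
  (hka : 0 < ka) (hkb : 0 < kb) (hda : 0 < da) (hdb : 0 < db)
  (htha : 0 < tha) (hthb : 0 < thb) (hthaa : 0 < thaa)
  (hA1 : 0 <= A1) (hB1 : 0 <= B1)
  (hna : (0 < na)%nat) (hnb : (0 < nb)%nat) (hnaa : (0 < naa)%nat)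
  (ra rb pa pb : R) (hpa : 0 < pa) (hpb : 0 < pb)
  (hss1 : f_ra ma thaa thb naa nb ga A1 ra rb pa pb = 0)
  (hss2 : f_rb mb tha na gb B1 ra rb pa pb = 0)
  (hss3 : f_pa ka da ra rb pa pb = 0)
  (hss4 : f_pb kb db ra rb pa pb = 0) :
  let X := Xq ma thaa thb naa nb pa pb in
  let Y := Yq ma thaa thb naa nb pa pb in
  let Z := Zq mb tha na pa in
  let e1 := ga + gb + da + db in
  let e2 := ga * gb + (ga + gb) * (da + db) + da * db - ka * X in
  let e3 := da * db * (ga + gb) + (da + db) * ga * gb - ka * (db + gb) * X in
  let e4 := ga * gb * da * db - ka * kb * Y * Z - ka * gb * db * X in
  0 < e1 -> 0 < e3 -> 0 < e4 -> 0 < e1 * e2 * e3 - e1 ^ 2 * e4 - e3 ^ 2 ->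
  locally_asymptotically_stable
    (f_ra ma thaa thb naa nb ga A1) (f_rb mb tha na gb B1)
    (f_pa ka da) (f_pb kb db) ra rb pa pb.
Proof.
  intros X Y Z e1 e2 e3 e4 H1 H3 H4 HRH.
  assert (hX : 0 <= X) by (apply X_nonneg; auto).
  assert (hYZ : 0 <= Y * Z) by (apply YZ_nonneg; auto).
  destruct (lin_lyap ga gb da db ka kb X Y Z hga hgb hda hdb hka hkb hX hYZ H4)
    as (d1 & d2 & d3 & d4 & c & hd1 & hd2 & hd3 & hd4 & hc & HLin).
  set (eps := c / (2 * (d1 + d2))).
  assert (heps : 0 < eps) by (unfold eps; apply Rdiv_lt_0_compat; lra).
  destruct (h_diffXY ma thaa thb naa nb pa pb hthaa hthb hpa hpb hnaa hnb (mkposreal eps heps)) as [del1 HB1].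
  pose proof (proj1 (is_derive_Reals _ _ _) (F_der mb tha na pa htha hpa hna)) as HF.
  destruct (HF eps heps) as [del2 HB2].
  set (rho := Rmin del1 del2).
  assert (hrho : 0 < rho) by (unfold rho; apply Rmin_pos; apply cond_pos).
  apply (LAS_from_lyap _ _ _ _ ra rb pa pb d1 d2 d3 d4 (c / 2) rho); try lra.
  intros y1 y2 y3 y4 a1 a2 a3 a4.
  assert (r1 : rho <= del1) by apply Rmin_l.
  assert (r2 : rho <= del2) by apply Rmin_r.
  specialize (HB1 (pa + y3) (pb + y4)).
  replace (pa + y3 - pa) with y3 in HB1 by ring.
  replace (pb + y4 - pb) with y4 in HB1 by ring.
  specialize (HB1 ltac:(lra) ltac:(lra)). cbv beta in HB1. simpl in HB1.
  set (g1 := ma * ((pa + y3) / thaa) ^ naa / (1 + ((pa + y3) / thaa) ^ naa * ((pb + y4) / thb) ^ nb)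
      - ma * (pa / thaa) ^ naa / (1 + (pa / thaa) ^ naa * (pb / thb) ^ nb) - (X * y3 + Y * y4)) in HB1.
  set (g2 := mb / (1 + ((pa + y3) / tha) ^ na) - mb / (1 + (pa / tha) ^ na) - Z * y3).
  assert (HB2' : Rabs g2 <= eps * Rabs y3).
  { destruct (Req_dec y3 0) as [->|hne].
    - unfold g2. rewrite Rplus_0_r, Rmult_0_r, Rabs_R0, Rmult_0_r.
      replace (mb / (1 + (pa / tha) ^ na) - mb / (1 + (pa / tha) ^ na) - 0) with 0 by ring.
      rewrite Rabs_R0; lra.
    - specialize (HB2 y3 hne ltac:(lra)). cbv beta in HB2.
      assert (E : g2 = ((mb / (1 + ((pa + y3) / tha) ^ na) - mb / (1 + (pa / tha) ^ na)) / y3 - Z) * y3)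
        by (unfold g2; generalize (mb / (1 + ((pa + y3) / tha) ^ na) - mb / (1 + (pa / tha) ^ na)); intros; field; auto).
      rewrite E, Rabs_mult. apply Rmult_le_compat_r; [apply Rabs_pos|]. fold Z in HB2. lra. }
  assert (E1 : f_ra ma thaa thb naa nb ga A1 (ra + y1) (rb + y2) (pa + y3) (pb + y4)
     = g1 + (- ga * y1 + X * y3 + Y * y4)).
  { unfold f_ra in *. unfold g1. lra. }
  assert (E2 : f_rb mb tha na gb B1 (ra + y1) (rb + y2) (pa + y3) (pb + y4)
     = g2 + (- gb * y2 + Z * y3)).
  { unfold f_rb in *. unfold g2. lra. }
  assert (E3 : f_pa ka da (ra + y1) (rb + y2) (pa + y3) (pb + y4) = ka * y1 - da * y3).
  { unfold f_pa in *. lra. }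
  assert (E4 : f_pb kb db (ra + y1) (rb + y2) (pa + y3) (pb + y4) = kb * y2 - db * y4).
  { unfold f_pb in *. lra. }
  rewrite E1, E2, E3, E4.
  specialize (HLin y1 y2 y3 y4).
  set (S := y1 ^ 2 + y2 ^ 2 + y3 ^ 2 + y4 ^ 2) in *.
  assert (G1 : d1 * y1 * g1 <= d1 * eps * S).
  { assert (y1 * g1 <= Rabs y1 * Rabs g1) by (rewrite <- Rabs_mult; apply Rle_abs).
    pose proof (Rabs_pos y1).
    assert (Rabs y1 * Rabs g1 <= Rabs y1 * (eps * Rmax (Rabs y3) (Rabs y4))) by (apply Rmult_le_compat_l; auto).
    pose proof (max_bound y1 y2 y3 y4) as MB. fold S in MB.
    assert (eps * (Rabs y1 * Rmax (Rabs y3) (Rabs y4)) <= eps * S) by (apply Rmult_le_compat_l; lra).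
    replace (Rabs y1 * (eps * Rmax (Rabs y3) (Rabs y4))) with (eps * (Rabs y1 * Rmax (Rabs y3) (Rabs y4))) in H2 by ring.
    assert (y1 * g1 <= eps * S) by lra.
    replace (d1 * y1 * g1) with (d1 * (y1 * g1)) by ring.
    replace (d1 * eps * S) with (d1 * (eps * S)) by ring.
    apply Rmult_le_compat_l; lra. }
  assert (G2 : d2 * y2 * g2 <= d2 * eps * S).
  { assert (y2 * g2 <= Rabs y2 * Rabs g2) by (rewrite <- Rabs_mult; apply Rle_abs).
    pose proof (Rabs_pos y2).
    assert (Rabs y2 * Rabs g2 <= Rabs y2 * (eps * Rabs y3)) by (apply Rmult_le_compat_l; auto).
    pose proof (prod_bound y2 y3).
    assert (y2 ^ 2 + y3 ^ 2 <= S) by (unfold S; pose proof (pow2_ge_0 y1); pose proof (pow2_ge_0 y4); lra).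
    assert (eps * (Rabs y2 * Rabs y3) <= eps * S) by (apply Rmult_le_compat_l; lra).
    replace (Rabs y2 * (eps * Rabs y3)) with (eps * (Rabs y2 * Rabs y3)) in H2 by ring.
    assert (y2 * g2 <= eps * S) by lra.
    replace (d2 * y2 * g2) with (d2 * (y2 * g2)) by ring.
    replace (d2 * eps * S) with (d2 * (eps * S)) by ring.
    apply Rmult_le_compat_l; lra. }
  assert (Eeps : d1 * eps * S + d2 * eps * S = c / 2 * S).
  { unfold eps. field. lra. }
  assert (EX : d1 * y1 * (g1 + (- ga * y1 + X * y3 + Y * y4)) + d2 * y2 * (g2 + (- gb * y2 + Z * y3)) +
     d3 * y3 * (ka * y1 - da * y3) + d4 * y4 * (kb * y2 - db * y4)
     = (d1 * y1 * (- ga * y1 + X * y3 + Y * y4) + d2 * y2 * (- gb * y2 + Z * y3) +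
     d3 * y3 * (ka * y1 - da * y3) + d4 * y4 * (kb * y2 - db * y4)) + d1 * y1 * g1 + d2 * y2 * g2) by ring.
  rewrite EX. lra.
Qed.
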